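(* Let $R$ be a commutative ring with identity, let $(S,\leq)$ be a strictly ordered monoid in which $\leq$ is a total order, and let $w\in S$. Let $P_w:[[R^{S,\leq}]]\to[[R^{S,\leq}]]$ be given by $P_w(f)(s)=f(s)$ if $s<w$ and $P_w(f)(s)=0$ otherwise, and set $B_w=\{(u,v)\in S\times S: u<w,\ v<w,\ u+v\not<w\}$. Then $([[R^{S,\leq}]],P_w)$ is a Rota-Baxter algebra (of weight $-1$) if and only if $w\geq 0$ and $B_w=\emptyset$.
   Context: All monoids are commutative and written additively with neutral element $0$. A partially ordered set is artinian if every strictly decreasing sequence is finite, and narrow if every subset of pairwise incomparable elements is finite. A strictly ordered monoid is a commutative monoid $S$ with a partial order $\leq$ such that $s<s'$ implies $s+t<s'+t$ for all $s,s',t\in S$. The ring of generalized power series $[[R^{S,\leq}]]$ is the set of maps $f:S\to R$ with artinian and narrow support $\{s: f(s)\neq 0\}$, with pointwise addition and convolution $(fg)(s)=\sum f(u)g(v)$ over the finitely many pairs $(u,v)$ with $u+v=s$, $f(u)\neq0$, $g(v)\neq0$. A Rota-Baxter algebra (of weight $-1$) is an associative $R$-algebra $A$ with an $R$-linear $P:A\to A$ satisfying $P(x)P(y)=P(xP(y))+P(P(x)y)-P(xy)$ for all $x,y\in A$. *)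

(* Defs.v *)
From HB Require Import structures.
From mathcomp Require Import all_boot all_order all_algebra.
From mathcomp Require Import boolp classical_sets functions cardinality fsbigop.
Set Implicit Arguments.
Unset Strict Implicit.
Unset Printing Implicit Defensive.
Import Order.TTheory GRing.Theory Num.Theory.
Local Open Scope classical_set_scope.
Local Open Scope ring_scope.

Section GPS.
Variables (S : nmodType) (le : rel S).

Definition slt (x y : S) : bool := le x y && (x != y).

Definition is_partial_order : Prop :=
  [/\ (forall x, le x x),
      (forall x y, le x y -> le y x -> x = y) &
      (forall x y z, le x y -> le y z -> le x z)].

Definition is_total_order : Prop :=
  is_partial_order /\ (forall x y, le x y || le y x).

Definition strictly_ordered_monoid : Prop :=
  is_partial_order /\
  (forall s s' t : S, slt s s' -> slt (s + t) (s' + t)).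

Definition artinian (A : set S) : Prop :=
  ~ (exists u : nat -> S, (forall n, A (u n)) /\ (forall n, slt (u n.+1) (u n))).

Definition narrow (A : set S) : Prop :=
  forall B : set S, B `<=` A ->
    (forall x y, B x -> B y -> x <> y -> ~~ le x y /\ ~~ le y x) ->
    finite_set B.

Variable R : comNzRingType.

Definition support (f : S -> R) : set S := [set s | f s != 0].

(* membership in the ring of generalized power series [[R^{S,<=}]] *)
Definition is_gps (f : S -> R) : Prop :=
  artinian (support f) /\ narrow (support f).

(* convolution product: sum over pairs (u,v) with u+v = s
   (only finitely many nonzero terms for generalized power series) *)
Definition gps_mul (f g : S -> R) : S -> R :=
  fun s => \sum_(p \in [set p : S * S | p.1 + p.2 = s]) (f p.1 * g p.2).

Definition gps_add (f g : S -> R) : S -> R := fun s => f s + g s.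
Definition gps_sub (f g : S -> R) : S -> R := fun s => f s - g s.
Definition gps_scale (a : R) (f : S -> R) : S -> R := fun s => a * f s.

Definition rota_baxter (P : (S -> R) -> (S -> R)) : Prop :=
  [/\ (forall f, is_gps f -> is_gps (P f)),
      (forall a f g, is_gps f -> is_gps g ->
         P (gps_add (gps_scale a f) g) = gps_add (gps_scale a (P f)) (P g)) &
      (forall f g, is_gps f -> is_gps g ->
         gps_mul (P f) (P g) =
         gps_sub (gps_add (P (gps_mul f (P g))) (P (gps_mul (P f) g)))
                 (P (gps_mul f g)))].

Definition P_w (w : S) (f : S -> R) : S -> R :=
  fun s => if slt s w then f s else 0.

End GPS.

Definition B_w (S : nmodType) (le : rel S) (w : S) : set (S * S) :=
  [set p | slt le p.1 w /\ slt le p.2 w /\ ~~ slt le (p.1 + p.2) w].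

(* Main.v *)
From Pilot Require Import Defs.
From HB Require Import structures.
From mathcomp Require Import all_boot all_order all_algebra.
From mathcomp Require Import finmap.
From mathcomp Require Import ring.
From mathcomp Require Import boolp classical_sets functions cardinality fsbigop.
Set Implicit Arguments.
Unset Strict Implicit.
Unset Printing Implicit Defensive.
Import GRing.Theory.
Local Open Scope classical_set_scope.
Local Open Scope ring_scope.

Lemma slt_irr (S : nmodType) (le : rel S) x : ~~ slt le x x.
Proof. by rewrite /slt eqxx andbF. Qed.

Lemma slt_le (S : nmodType) (le : rel S) x y : slt le x y -> le x y.
Proof. by case/andP. Qed.

Lemma le_slt_F (S : nmodType) (le : rel S) (Hpo : is_partial_order le) x y :
  le x y -> slt le y x -> False.
Proof.
case: Hpo => _ Hanti _ Hxy /andP[Hyx Hne].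
by move: Hne; rewrite (Hanti _ _ Hxy Hyx) eqxx.
Qed.

Lemma total_slt (S : nmodType) (le : rel S) (Htot : is_total_order le) x y :
  slt le x y || le y x.
Proof.
case: Htot => [[Hrefl _ _] Ht]; rewrite /slt.
case: (eqVneq x y) => [->|Hne]; first by rewrite Hrefl orbT.
by case/orP: (Ht x y) => ->; rewrite ?orbT.
Qed.

Lemma le_addr (S : nmodType) (le : rel S) (Hs : strictly_ordered_monoid le) a b t :
  le a b -> le (a + t) (b + t).
Proof.
case: Hs => [[Hrefl _ _] Hm] Hab.
case: (eqVneq a b) => [->|Hne]; first exact: Hrefl.
by apply: slt_le; apply: Hm; rewrite /slt Hab Hne.
Qed.

Lemma min_ex (S : nmodType) (le : rel S) (Htot : is_total_order le)
  (A B : set S) : artinian le A -> B `<=` A -> (exists x, B x) ->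
  exists x, B x /\ forall y, B y -> le x y.
Proof.
move=> HA HBA [x0 Bx0].
case: (pselect (exists x, B x /\ forall y, B y -> le x y)) => // Hno.
have step : forall x, B x -> exists y, B y /\ slt le y x.
  move=> x Bx.
  have : ~ forall y, B y -> le x y by move=> H; apply: Hno; exists x.
  move/existsNP => [y Hy].
  have [By Hxy] : B y /\ ~ le x y.
    case: (pselect (B y)) => [By|nBy]; last by case: Hy => /nBy.
    by split => // H; apply: Hy.
  exists y; split => //.
  case/orP: (total_slt Htot y x) => // Hle; by case: Hxy.
pose h x := xget x (fun y => B y /\ slt le y x).
have hP : forall x, B x -> B (h x) /\ slt le (h x) x.
  by move=> x Bx; exact: (xgetPex x (step x Bx)).
pose u n := iter n h x0.
have Bu : forall n, B (u n).
  by elim=> [|n IH] //=; case: (hP _ IH).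
exfalso; apply: HA; exists u; split => [n|n]; first exact: HBA.
by case: (hP _ (Bu n)).
Qed.
Lemma fin_U (S : nmodType) (le : rel S) (Hs : strictly_ordered_monoid le)
  (Htot : is_total_order le) (Af Ag : set S) (s : S) :
  artinian le Af -> artinian le Ag ->
  finite_set [set u | Af u /\ exists v, Ag v /\ u + v = s].
Proof.
move=> HAf HAg.
set U := [set u | Af u /\ exists v, Ag v /\ u + v = s].
have HUA : U `<=` Af by move=> x [].
have Hpo : is_partial_order le by case: Hs.
have [Hrefl Hanti Htr] := Hpo.
pose mn (B : set S) := xget 0 (fun x => B x /\ forall y, B y -> le x y).
have mnP : forall B, B `<=` U -> (exists x, B x) ->
    B (mn B) /\ forall y, B y -> le (mn B) y.
  move=> B HB Hex.
  have HBA : B `<=` Af by move=> x /HB /HUA.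
  exact: (xgetPex 0 (min_ex Htot HAf HBA Hex)).
pose a := fix a n := if n is n'.+1 then mn [set x | U x /\ slt le (a n') x]
                     else mn U.
case: (pselect (exists n, forall x, U x -> ~ slt le (a n) x)) => [[n Hn]|Hno].
  apply: (@sub_finite_set _ _ (a @` `I_n.+1)); last first.
    exact: (finite_image a (finite_II n.+1)).
  have key : forall k x, U x -> le x (a k) -> exists2 j, (j < k.+1)%N & a j = x.
    elim=> [|k IH] x Ux Hxa.
      exists 0%N => //.
      have [_ Hm] := mnP U (fun z h => h) (ex_intro _ x Ux).
      exact: Hanti _ _ (Hm _ Ux) Hxa.
    case/orP: (total_slt Htot (a k) x) => [Hlt|Hle].
      exists k.+1 => //.
      have [_ Hm] := mnP [set x | U x /\ slt le (a k) x] (fun z h => h.1)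
                       (ex_intro _ x (conj Ux Hlt)).
      exact: Hanti _ _ (Hm _ (conj Ux Hlt)) Hxa.
    have [j Hj Hjx] := IH x Ux Hle; exists j => //; exact: ltnW.
  move=> x Ux.
  have Hle : le x (a n).
    by case/orP: (total_slt Htot (a n) x) => // Hlt; case: (Hn x Ux).
  by have [j Hj Hjx] := key n x Ux Hle; exists j.
have Hno' : forall n, exists x, U x /\ slt le (a n) x.
  move=> n; apply: contrapT => H; apply: Hno; exists n => x Ux Hlt.
  by apply: H; exists x.
have Ha : forall n, U (a n.+1) /\ slt le (a n) (a n.+1).
  move=> n; have [[Ux Hx] _] := mnP [set x | U x /\ slt le (a n) x]
                                  (fun z h => h.1) (Hno' n).
  by split.
have Hv : forall n, exists v, Ag v /\ a n.+1 + v = s.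
  by move=> n; have [[_ [v Hv]] _] := Ha n; exists v.
have [vv Hvv] := choice Hv.
exfalso; apply: HAg; exists vv; split => [n|n]; first by case: (Hvv n).
case/orP: (total_slt Htot (vv n.+1) (vv n)) => // Hle.
exfalso.
have [_ Hm] := Hs.
have H1 : slt le (a n.+1 + vv n) (a n.+2 + vv n) by apply: Hm; case: (Ha n.+1).
have H2 : le (a n.+2 + vv n) (a n.+2 + vv n.+1).
  by rewrite ![a n.+2 + _]addrC; apply: le_addr.
have [_ E1] := Hvv n; have [_ E2] := Hvv n.+1.
rewrite E1 E2 in H1 H2.
by have := le_slt_F Hpo H2; apply.
Qed.

Lemma gps_sub_supp (S : nmodType) (le : rel S) (R : comNzRingType) (f g : S -> R) :
  is_gps le f -> Pilot.Defs.support g `<=` Pilot.Defs.support f -> is_gps le g.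
Proof.
move=> [Ha Hn] Hsub; split.
  by move=> [u [Hu Hd]]; apply: Ha; exists u; split => // n; apply: Hsub.
move=> B HB Hinc; apply: Hn => //; exact: subset_trans Hsub.
Qed.

Lemma gps_single (S : nmodType) (le : rel S) (R : comNzRingType) (f : S -> R) u :
  (forall x, x != u -> f x = 0) -> is_gps le f.
Proof.
move=> Hf.
have Hs : Pilot.Defs.support f `<=` [set u].
  move=> x; rewrite /support /= => Hx; apply/eqP; apply: contraNT Hx => Hne.
  by rewrite Hf.
split.
  move=> [a [Ha Hd]]; have := Hd 0%N; rewrite (Hs _ (Ha 1%N)) (Hs _ (Ha 0%N)).
  by rewrite /slt eqxx andbF.
move=> B HB _; apply: (sub_finite_set (B := [set u])); last exact: finite_set1.
exact: subset_trans Hs.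
Qed.

Lemma mul_single (S : nmodType) (R : comNzRingType) (f g : S -> R) u v s :
  (forall x, x != u -> f x = 0) -> (forall x, x != v -> g x = 0) ->
  gps_mul f g s = if u + v == s then f u * g v else 0.
Proof.
move=> Hf Hg; rewrite /gps_mul.
case: eqP => [E|NE].
  rewrite -(fsbig_widen [set (u, v)] _ (fun p : S * S => f p.1 * g p.2)).
  - by rewrite fsbig_set1.
  - by move=> p /= ->.
  move=> [x y] [/= _ Hne]; rewrite /preimage /=.
  case: (eqVneq x u) => [Ex|Nx]; last by rewrite Hf ?mul0r.
  case: (eqVneq y v) => [Ey|Ny]; last by rewrite (Hg y) ?mulr0.
  by case: Hne; rewrite Ex Ey.
apply: fsbig1 => [[x y]] /= Hxy.
case: (eqVneq x u) => [Ex|Nx]; last by rewrite Hf ?mul0r.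
case: (eqVneq y v) => [Ey|Ny]; last by rewrite (Hg y) ?mulr0.
by case: NE; rewrite -Ex -Ey.
Qed.
Lemma finX (S : nmodType) (le : rel S) (R : comNzRingType)
  (Hs : strictly_ordered_monoid le) (Htot : is_total_order le)
  (f g : S -> R) s : is_gps le f -> is_gps le g ->
  finite_set [set p : S * S | p.1 + p.2 = s /\ f p.1 != 0 /\ g p.2 != 0].
Proof.
move=> [Haf _] [Hag _].
apply: (sub_finite_set (B := [set u | Pilot.Defs.support f u /\ exists v, Pilot.Defs.support g v /\ u + v = s]
    `*` [set u | Pilot.Defs.support g u /\ exists v, Pilot.Defs.support f v /\ u + v = s])).
  move=> [x y] /= [E [Hx Hy]]; split => /=.
    by split => //; exists y.
  by split => //; exists x; rewrite addrC.
apply: finite_setX.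
  exact: (fin_U Hs Htot s Haf Hag).
exact: (fin_U Hs Htot s Hag Haf).
Qed.

Lemma sum_conv (S : nmodType) (R : comNzRingType) (f g : S -> R) s
  (H : S * S -> R) :
  finite_set [set p : S * S | p.1 + p.2 = s /\ f p.1 != 0 /\ g p.2 != 0] ->
  (forall p, H p != 0 -> f p.1 != 0 /\ g p.2 != 0) ->
  \sum_(p \in [set p : S * S | p.1 + p.2 = s]) H p =
  \sum_(p <- fset_set [set p : S * S | p.1 + p.2 = s /\ f p.1 != 0 /\ g p.2 != 0]) H p.
Proof.
move=> Hfin HH.
rewrite -(fsbig_widen [set p : S * S | p.1 + p.2 = s /\ f p.1 != 0 /\ g p.2 != 0]).
- exact: fsbig_finite.
- by move=> p [].
move=> p [/= Hp Hn]; rewrite /preimage /=; apply/eqP; apply: contraT => Hne.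
exfalso; apply: Hn; split => //; exact: HH.
Qed.
Lemma P_single (S : nmodType) (le : rel S) (R : comNzRingType) w (f : S -> R) u :
  (forall x, x != u -> f x = 0) -> forall x, x != u -> P_w le w f x = 0.
Proof. by move=> Hf x Hx; rewrite /P_w Hf // if_same. Qed.

Lemma RB_delta (S : nmodType) (le : rel S) (R : comNzRingType) w :
  rota_baxter le (P_w (R:=R) le w) -> forall u v,
  (if slt le u w && slt le v w then 1 else 0 : R) =
  if slt le (u + v) w then
    (if slt le v w then 1 else 0) + (if slt le u w then 1 else 0) - 1
  else 0.
Proof.
move=> [_ _ H3] u v.
pose d (a : S) := fun x : S => if x == a then 1 else 0 : R.
have dz : forall a x, x != a -> d a x = 0 by move=> a x /negbTE; rewrite /d => ->.
have gd : forall a, is_gps le (d a) by move=> a; exact: gps_single (dz a).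
have := congr1 (fun F => F (u + v)) (H3 _ _ (gd u) (gd v)).
rewrite /gps_sub /gps_add.
have Pd := fun a => @P_single _ le _ w _ a (dz a).
rewrite (mul_single (u+v) (Pd u) (Pd v)) eqxx.
rewrite /P_w.
rewrite (mul_single (u+v) (dz u) (Pd v)) (mul_single (u+v) (Pd u) (dz v))
        (mul_single (u+v) (dz u) (dz v)) eqxx.
rewrite /P_w /d !eqxx.
case: (slt le u w); case: (slt le v w); case: (slt le (u + v) w) => /= E;
  (etransitivity; [|etransitivity; [exact E|]]); ring.
Qed.
Unset Implicit Arguments.
Set Strict Implicit.
Theorem corollary3p2 (R : comNzRingType) (S : nmodType) (le : rel S)
  (Hsom : strictly_ordered_monoid le) (Htot : is_total_order le) (w : S) :
  rota_baxter le (P_w (R:=R) le w) <-> (le 0 w /\ B_w le w = set0).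
Proof.
have Hpo : is_partial_order le by case: Hsom.
have [Hrefl Hanti Htr] := Hpo.
have oneN0 : (1 : R) != 0 by exact: oner_neq0.
split.
  move=> HRB; split.
    case/orP: (total_slt Htot w 0) => // Hlt.
    have [_ Hm] := Hsom.
    have := Hm _ _ w Hlt; rewrite add0r => Hww.
    have := RB_delta HRB w w; rewrite Hww (negbTE (slt_irr _ _)) /=.
    rewrite add0r sub0r => /eqP; rewrite eq_sym oppr_eq0 => /eqP E.
    by move: oneN0; rewrite E eqxx.
  apply/seteqP; split => [[u v] [/= Hu [Hv Hn]]|//].
  have := RB_delta HRB u v; rewrite Hu Hv (negbTE Hn) /= => /eqP.
  by rewrite (negbTE oneN0).
move=> [Hw0 HB]; split.
- move=> f gf.
  have Hsub : Pilot.Defs.support (P_w le w f) `<=` Pilot.Defs.support f.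
    move=> x; rewrite /Pilot.Defs.support /= /P_w.
    by case: ifP => //; rewrite eqxx.
  exact: (gps_sub_supp gf Hsub).
- move=> a f g _ _; apply/funext => x; rewrite /P_w /gps_add /gps_scale.
  by case: ifP => //; rewrite mulr0 addr0.
move=> f g gf gg; apply/funext => s.
have HX := finX Hsom Htot s gf gg.
rewrite /gps_sub /gps_add /P_w /gps_mul.
rewrite !(@sum_conv _ _ f g s _ HX).
2-5: move=> p H; split; apply: contraNneq H => ->;
    by rewrite ?if_same ?mul0r ?mulr0.
have hBw : forall u v, slt le u w -> slt le v w -> slt le (u + v) w.
  move=> u v Hu Hv; apply: contraT => Hn.
  have : B_w le w (u, v) by split => //.
  by rewrite HB.
have hge : forall x, ~~ slt le x w -> le w x.
  by move=> x Hx; case/orP: (total_slt Htot x w) => //; rewrite (negbTE Hx).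
have hadd : forall u v, le w u -> le w v -> le w (u + v).
  move=> u v Hu Hv.
  have H1 : le w (w + w) by have := le_addr Hsom w Hw0; rewrite add0r.
  have H2 : le (w + w) (u + w) by exact: le_addr.
  have H3 : le (u + w) (u + v) by rewrite ![u + _]addrC; exact: le_addr.
  exact: Htr _ _ _ H1 (Htr _ _ _ H2 H3).
case: ifP => Hs.
  rewrite -big_split /= -sumrB; apply: eq_big_seq => p.
  rewrite in_fset_set // inE => -[Hp _].
  case Hu: (slt le p.1 w); case Hv: (slt le p.2 w); try ring.
  exfalso; have := hadd _ _ (hge _ (negbT Hu)) (hge _ (negbT Hv)).
  rewrite Hp => Hle; by have := le_slt_F Hpo Hle; apply.
rewrite addr0 subr0; apply: big1_seq => p.
rewrite in_fset_set // inE => -[Hp _].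
case Hu: (slt le p.1 w); case Hv: (slt le p.2 w); rewrite ?mul0r ?mulr0 //.
by move: (hBw _ _ Hu Hv); rewrite Hp Hs.
Qed.
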